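(* Let $H$ be a subgroup of $\mathbb{Z}^\omega$ of countably infinite rank. Then there exist a group endomorphism $f$ of $\mathbb{Z}^\omega$ and positive integers $(d_n)_{n\in\omega}$ such that $f(H)$ contains the subgroup $\bigoplus_{n\in\omega} d_n\mathbb{Z}\,e_n$ of $\mathbb{Z}^{(\omega)}$, i.e. $d_ne_n\in f(H)$ for every $n\in\omega$.
   Context: $\mathbb{Z}^{\omega}$ is the product of countably many copies of $\mathbb{Z}$; $\mathbb{Z}^{(\omega)}\subseteq\mathbb{Z}^\omega$ is the subgroup of finitely supported sequences; $e_n\in\mathbb{Z}^{(\omega)}$ is the $n$-th standard unit vector. Rank means torsion-free rank. *)

(* Defs.v *)
From mathcomp Require Import all_boot all_order all_algebra.
Set Implicit Arguments. Unset Strict Implicit. Unset Printing Implicit Defensive.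
Import GRing.Theory.
Local Open Scope ring_scope.

Definition Zomega := nat -> int.

Definition zset := Zomega -> Prop.

Definition zadd (x y : Zomega) : Zomega := fun k => x k + y k.
Definition zopp (x : Zomega) : Zomega := fun k => - x k.
Definition zzero : Zomega := fun _ => 0.

Definition unitvec (n : nat) : Zomega := fun k => if k == n then 1 else 0.

Definition zscale (d : int) (x : Zomega) : Zomega := fun k => d * x k.

Definition is_subgroup (H : zset) : Prop :=
  H zzero /\ (forall x y, H x -> H y -> H (zadd x y)) /\ (forall x, H x -> H (zopp x)).

(* group endomorphism of Z^omega (additive map; no continuity assumed) *)
Definition is_endo (f : Zomega -> Zomega) : Prop :=
  forall x y, f (zadd x y) = zadd (f x) (f y).

Definition lin_indep (S : zset) : Prop :=
  forall (n : nat) (v : 'I_n -> Zomega) (c : 'I_n -> int),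
    injective v -> (forall i, S (v i)) ->
    (forall k : nat, \sum_(i < n) c i * v i k = 0) ->
    forall i, c i = 0.

(* torsion-free rank of H is countably infinite (= aleph_0):
   H contains an infinite independent set, and every independent subset
   of H is countable. *)
Definition countably_infinite_rank (H : zset) : Prop :=
  (exists v : nat -> Zomega, injective v /\ (forall n, H (v n)) /\
       lin_indep (fun x => exists n, x = v n)) /\
  (forall S : zset, (forall x, S x -> H x) -> lin_indep S ->
     exists g : Zomega -> nat, forall x y, S x -> S y -> g x = g y -> x = y).

(* Main.v *)
Require Import Defs.
From mathcomp Require Import all_boot all_order all_algebra ring.
From Stdlib Require Import Classical ClassicalEpsilon FunctionalExtensionality.
Import GRing.Theory Num.Theory.
Local Open Scope ring_scope.

Lemma dep_int (N : nat) (u : 'I_N.+1 -> nat -> int) :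
  exists z : 'I_N.+1 -> int, (exists i, z i != 0) /\
    forall k, (k < N)%N -> \sum_i z i * u i k = 0.
Proof.
pose A : 'M[rat]_(N.+1, N) := \matrix_(i, k) (u i k)%:~R.
have nf : ~~ row_free A.
  rewrite /row_free; apply/negP => /eqP h; have := rank_leq_col A; rewrite h ltnn //.
have kA : kermx A != 0 by rewrite kermx_eq0.
have [i0 hi0] : exists i, row i (kermx A) != 0.
  apply/existsP; case: (boolP [exists i, row i (kermx A) != 0]) => // hn.
  move/negP: kA => []; apply/eqP/row_matrixP => i.
  by rewrite row0; move/existsPn: hn => /(_ i) /negPn /eqP.
set c := row i0 (kermx A) in hi0.
have cA : c *m A = 0 by rewrite /c -row_mul mulmx_ker row0.
have [j0 hj0] : exists j, c 0 j != 0.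
  apply/existsP; case: (boolP [exists j, c 0 j != 0]) => // hn.
  move/negP: hi0 => []; apply/eqP/matrixP => i j.
  rewrite (ord1 i); move/existsPn: hn => /(_ j) /negPn /eqP; rewrite /c !mxE //.
pose D := \prod_j denq (c 0 j).
pose z j := numq (c 0 j) * \prod_(l | l != j) denq (c 0 l).
have zE j : (z j)%:~R = c 0 j * D%:~R :> rat.
  rewrite /z /D [X in _ = _ * X%:~R](bigD1 j) //= !intrM numqE mulrA //.
have D0 : D != 0.
  by rewrite /D; apply/prodf_neq0 => i _; rewrite denq_neq0.
exists z; split.
  exists j0; rewrite -(intr_eq0 rat) zE mulf_neq0 // intr_eq0 //.
move=> k hk.
apply/eqP; rewrite -(intr_eq0 rat) rmorph_sum /=.
have := congr1 (fun M : 'M[rat]_(1, N) => M 0 (Ordinal hk)) cA; rewrite !mxE => e.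
rewrite (eq_bigr (fun i => D%:~R * (c 0 i * A i (Ordinal hk)))); last first.
  move=> i _; rewrite intrM zE /A !mxE /=; ring.
by rewrite -mulr_sumr e mulr0.
Qed.

Lemma H_scale (H : zset) : is_subgroup H ->
  forall (z : int) x, H x -> H (fun k => z * x k).
Proof.
move=> [H0 [HD HN]].
have pos : forall (n : nat) x, H x -> H (fun k => n%:Z * x k).
  move=> n x hx; elim: n => [|n IH].
    have -> : (fun k => 0%:Z * x k) = zzero by apply: functional_extensionality => k; rewrite mul0r.
    by [].
  have -> : (fun k => n.+1%:Z * x k) = zadd x (fun k => n%:Z * x k).
    by apply: functional_extensionality => k; rewrite /zadd intS mulrDl mul1r.
  exact: HD.
move=> [n|n] x hx; first exact: pos.
have -> : (fun k => Negz n * x k) = zopp (fun k => n.+1%:Z * x k).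
  by apply: functional_extensionality => k; rewrite /zopp NegzE mulNr.
exact/HN/pos.
Qed.

Lemma H_comb (H : zset) : is_subgroup H ->
  forall m (z : 'I_m -> int) (u : 'I_m -> Zomega), (forall i, H (u i)) ->
  H (fun k => \sum_(i < m) z i * u i k).
Proof.
move=> hs; have [H0 [HD HN]] := hs.
elim=> [|m IH] z u hu.
  have -> : (fun k => \sum_(i < 0) z i * u i k) = zzero.
    by apply: functional_extensionality => k; rewrite big_ord0.
  by [].
have -> : (fun k => \sum_(i < m.+1) z i * u i k) =
  zadd (fun k => \sum_(i < m) z (widen_ord (leqnSn m) i) * u (widen_ord (leqnSn m) i) k)
       (fun k => z ord_max * u ord_max k).
  by apply: functional_extensionality => k; rewrite big_ord_recr.
apply: HD; first by apply: IH.
exact: H_scale.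
Qed.

Lemma key (H : zset) : is_subgroup H -> countably_infinite_rank H ->
  forall N, exists p : Zomega * nat, H p.1 /\ p.1 p.2 != 0 /\ (N <= p.2)%N /\
     forall j, (j < N)%N -> p.1 j = 0.
Proof.
move=> hs [[v [vinj [vH vind]]] _] N.
have [z [[i hi] hz]] := dep_int N (fun i : 'I_N.+1 => v i).
pose w := fun k => \sum_(i < N.+1) z i * v i k.
have Hw : H w by apply: H_comb hs _ _ _ _ => j; apply: vH.
case: (classic (exists k, w k != 0)) => [[k hk]|hn]; last first.
  exfalso; move/eqP: hi; apply.
  apply: (vind N.+1 (fun i : 'I_N.+1 => v i) z).
  - by move=> a b e; apply: val_inj; apply: vinj.
  - by move=> j; exists j.
  - move=> k; apply/eqP; apply/negPn/negP => nk; apply: hn; by exists k.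
exists (w, k); split => //=; split => //; split.
  rewrite leqNgt; apply/negP => kN; move: hk; by rewrite /w hz.
exact: hz.
Qed.

Definition additive (p : Zomega -> int) := forall x y, p (zadd x y) = p x + p y.

Fixpoint killup (h : nat -> Zomega) (T : nat -> Zomega -> int) (th : Zomega -> int)
  (t : nat) : Zomega -> int :=
  match t with
  | 0 => th
  | S t => let th' := killup h T th t in
           fun x => T t (h t) * th' x - th' (h t) * T t x
  end.

Fixpoint tab (h : nat -> Zomega) (psi : nat -> Zomega -> int) (n : nat) :
  nat -> Zomega -> int :=
  match n with
  | 0 => fun _ _ => 0
  | S n => fun j => if j == n then killup h (tab h psi n) (psi n) n else tab h psi n j
  end.

Definition Phi h psi n := tab h psi n.+1 n.

Lemma tabE h psi n j : (j < n)%N -> tab h psi n j = Phi h psi j.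
Proof.
elim: n => [//|n IH] hj /=.
case: eqVneq => [->|ne]; first by rewrite /Phi /= eqxx.
apply: IH; by rewrite ltnS leq_eqVlt (negbTE ne) in hj.
Qed.

Lemma killup_ext h T T' th t : (forall t', (t' < t)%N -> T t' = T' t') ->
  killup h T th t = killup h T' th t.
Proof.
elim: t => [//|t IH] e /=.
rewrite IH; last by move=> t' lt; apply: e; apply: ltnW.
by rewrite e.
Qed.

Lemma PhiE h psi n : Phi h psi n = killup h (Phi h psi) (psi n) n.
Proof. rewrite /Phi /= eqxx; apply: killup_ext => t' lt; exact: tabE. Qed.

Lemma Phi_prop h psi :
  (forall n, additive (psi n)) -> (forall n, psi n (h n) != 0) ->
  (forall j i, (j < i)%N -> psi j (h i) = 0) ->
  forall n, additive (Phi h psi n) /\ Phi h psi n (h n) != 0 /\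
    forall i, i != n -> Phi h psi n (h i) = 0.
Proof.
move=> hadd hdiag hlow; elim/ltn_ind => n IHn.
suff: forall t, (t <= n)%N -> additive (killup h (Phi h psi) (psi n) t) /\
   killup h (Phi h psi) (psi n) t (h n) != 0 /\
   forall i, (i < t)%N || (n < i)%N -> killup h (Phi h psi) (psi n) t (h i) = 0.
  move=> /(_ n (leqnn n)) [a [b c]]; rewrite PhiE; split => //; split => // i ni.
  apply: c; by rewrite -neq_ltn.
elim=> [|t IH] tn.
  split; first exact: hadd. split; first exact: hdiag. by move=> i /= hi; apply: hlow.
have [a [b c]] := IH (ltnW tn).
have [pa [pb pc]] := IHn t tn.
set th := killup h (Phi h psi) (psi n) t in a b c *.
split.
  move=> x y /=; rewrite -/th a pa; ring.
split.
  rewrite /= -/th (pc n); last by rewrite gtn_eqF.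
  by rewrite mulr0 subr0 mulf_neq0.
move=> i /= hi; rewrite -/th.
case: (eqVneq i t) => [->|ne]; first ring.
rewrite c; last by move: hi; rewrite ltnS leq_eqVlt (negbTE ne).
by rewrite (pc i ne) mulr0 mulr0 subr0.
Qed.

Fixpoint Mseq (K : nat -> nat) (n : nat) : nat :=
  match n with 0 => 0%N | S n => (K (Mseq K n)).+1 end.

Theorem mainTheorem3 (H : zset) :
  is_subgroup H -> countably_infinite_rank H ->
  exists (f : Zomega -> Zomega) (d : nat -> nat),
    is_endo f /\ (forall n, (0 < d n)%N) /\
    (forall n : nat, exists h, H h /\ f h = zscale (d n)%:Z (unitvec n)).
Proof.
move=> hs hr.
pose F N := proj1_sig (constructive_indefinite_description _ (key H hs hr N)).
have FP N := proj2_sig (constructive_indefinite_description _ (key H hs hr N)).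
pose W N := (F N).1. pose K N := (F N).2.
pose M := Mseq K.
pose h n := W (M n).
pose psi n := fun x : Zomega => x (K (M n)).
have Mmono : forall j d, (M j.+1 <= M (j.+1 + d))%N.
  move=> j; elim=> [|d IH]; first by rewrite addn0.
  apply: (leq_trans IH); rewrite addnS /= /M /=.
  have [_ [_ [hk _]]] := FP (Mseq K (j.+1 + d)).
  by apply: (leq_trans hk); apply: leqnSn.
have PP : forall n, additive (Phi h psi n) /\ Phi h psi n (h n) != 0 /\
    forall i, i != n -> Phi h psi n (h i) = 0.
  apply: Phi_prop.
  - by move=> n x y.
  - move=> n; rewrite /psi /h; have [_ [e _]] := FP (M n); exact: e.
  - move=> j i ji; rewrite /psi /h.
    have [_ [_ [_ e]]] := FP (M i); apply: e.
    have := Mmono j (i - j.+1)%N; rewrite subnKC //.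
exists (fun x n => sgz (Phi h psi n (h n)) * Phi h psi n x).
exists (fun n => `|Phi h psi n (h n)|%N).
split.
  move=> x y; apply: functional_extensionality => n.
  have [a _] := PP n; by rewrite /zadd a mulrDr.
split.
  by move=> n; rewrite absz_gt0; have [_ [b _]] := PP n.
move=> n; exists (h n); split.
  by rewrite /h; have [e _] := FP (M n).
apply: functional_extensionality => m; rewrite /zscale /unitvec.
case: eqVneq => [->|ne]; first by rewrite mulr1 abszEsg.
have [_ [_ c]] := PP m; by rewrite (c n) ?mulr0 // eq_sym.
Qed.
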